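(* Let $p,q$ be primes congruent to $1$ modulo $4$, let $r$ be a positive integer, and let $m=4+8c$ for a nonnegative integer $c$. If $2mp^r-m^2q^2>0$, then $2mp^r-m^2q^2$ is good.
   Context: A positive integer is called good if it is not of the form $4^\alpha(8\beta+7)$ for integers $\alpha,\beta\ge 0$. *)

(* Defs.v *)
From mathcomp Require Import all_boot.
Set Implicit Arguments. Unset Strict Implicit. Unset Printing Implicit Defensive.

Definition good (n : nat) : Prop :=
  0 < n /\ ~ (exists a b : nat, n = 4 ^ a * (8 * b + 7)).

(* Main.v *)
Require Import Defs.
From mathcomp Require Import all_boot.
From mathcomp Require Import zify.

Lemma no8 (w a b : nat) : 8 * (2 * w + 1) <> 4 ^ a * (8 * b + 7).
Proof.
case: a => [|[|a]].
- rewrite expn0; lia.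
- rewrite expn1; lia.
- rewrite !expnS; set X := 4 ^ a; lia.
Qed.

Lemma core (P Q c u : nat) : P = 2 * u + 1 ->
  let m := 4 + 8 * c in
  m ^ 2 * Q < 2 * m * P -> good (2 * m * P - m ^ 2 * Q).
Proof.
move=> hP m hlt; rewrite /m in hlt *.
have e1 : (4 + 8 * c) ^ 2 * Q = 16 * ((1 + 2 * c) * ((1 + 2*c) * Q)) by rewrite expnS expn1; lia.
have e2 : 2 * (4 + 8 * c) * P = 8 * ((1 + 2 * c) * P) by lia.
rewrite e1 e2 in hlt *.
set K := (1 + 2 * c) * Q in hlt *.
have hK : 2 * K < P.
  have h : (1 + 2 * c) * (2 * K) < (1 + 2 * c) * P by lia.
  by rewrite ltn_pmul2l in h.
have [v hv] : exists v, P - 2 * K = 2 * v + 1.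
  exists ((P - 2 * K) %/ 2); lia.
have e3 : 8 * ((1 + 2 * c) * P) - 16 * ((1 + 2 * c) * K) = 8 * ((1 + 2*c) * (P - 2 * K)).
  rewrite mulnBr; lia.
rewrite e3 hv; split; first by lia.
case=> a [b hab].
apply: (@no8 (2 * c * v + c + v) a b); rewrite -hab; lia.
Qed.

Theorem mainTheorem5 (p q r c : nat) :
  prime p -> p %% 4 = 1 -> prime q -> q %% 4 = 1 -> 0 < r ->
  let m := 4 + 8 * c in
  m ^ 2 * q ^ 2 < 2 * m * p ^ r ->
  good (2 * m * p ^ r - m ^ 2 * q ^ 2).
Proof.
move=> _ hp _ _ _.
have oP : odd (p ^ r).
  rewrite oddX; have : odd p by rewrite [p](divn_eq p 4) hp oddD oddM /= andbF.
  by move=> ->; rewrite orbT.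
apply: (@core _ _ c ((p ^ r)./2)).
by rewrite -[in LHS](odd_double_half (p ^ r)) oP -muln2; lia.
Qed.
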